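(* Let $0\le b\le1$, $M>0$ and $0\le\alpha<1$, and let $r_0=r_0(\alpha)$ be the real root in $(0,1)$ of the equation \[\big((1-\alpha)(1+M)-2(2-\alpha)(2b-M)r\big)(1-r)^3=M\big(1-\alpha+(1+\alpha)r\big).\] Let $\mathcal{F}$ be the class of functions $f\in\mathcal{A}_b$, $f(z)=z+\sum_{n\ge2}a_nz^n$, with $|a_n|\le M$ for all $n\ge3$. Then: (i) every $f\in\mathcal{F}$ satisfies $\left|\frac{zf''(z)}{f'(z)}\right|\le1-\alpha$ for $|z|\le r_0$; (ii) $r_0(\alpha)$ is the radius of convexity of order $\alpha$ of $\mathcal{F}$; (iii) $r_0(1/2)$ is the radius of uniform convexity of $\mathcal{F}$. All results are sharp, with extremal function $f_0(z)=z-2bz^2-\frac{Mz^3}{1-z}$.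
   Context: $\mathbb{D}=\{z\in\mathbb{C}:|z|<1\}$. For $0\le b\le1$, $\mathcal{A}_b$ is the class of analytic functions $f$ on $\mathbb{D}$ of the form $f(z)=z+a_2z^2+a_3z^3+\cdots$ with $|a_2|=2b$. For a class $\mathcal{F}$ of analytic functions on $\mathbb{D}$ normalized by $f(0)=0$, $f'(0)=1$, and $0\le\alpha<1$, the radius of convexity of order $\alpha$ of $\mathcal{F}$ is the supremum of $r\in(0,1]$ such that every $f\in\mathcal{F}$ satisfies $f'(z)\ne0$ and $\operatorname{Re}\big(1+zf''(z)/f'(z)\big)>\alpha$ for $|z|<r$. The radius of uniform convexity of $\mathcal{F}$ is the supremum of $r\in(0,1]$ such that every $f\in\mathcal{F}$ satisfies $f'(z)\ne0$ and $\operatorname{Re}\big(1+zf''(z)/f'(z)\big)>\left|zf''(z)/f'(z)\right|$ for $|z|<r$. *)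

(* Defs.v *)
From Stdlib Require Import Reals.
From Coquelicot Require Import Coquelicot.
Open Scope R_scope.

Definition taylor_on_disk (a : nat -> C) (f : C -> C) : Prop :=
  forall z : C, Cmod z < 1 -> is_series (fun n => (a n * pow_n z n)%C) (f z).

Definition in_A (b : R) (f : C -> C) : Prop :=
  exists a : nat -> C,
    taylor_on_disk a f /\ a 0%nat = 0%C /\ a 1%nat = 1%C /\ Cmod (a 2%nat) = 2 * b.

Definition class_F (b M : R) (f : C -> C) : Prop :=
  exists a : nat -> C,
    taylor_on_disk a f /\ a 0%nat = 0%C /\ a 1%nat = 1%C /\ Cmod (a 2%nat) = 2 * b /\
    (forall n : nat, (3 <= n)%nat -> Cmod (a n) <= M).

Definition derivs_on_disk (f f1 f2 : C -> C) : Prop :=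
  forall z : C, Cmod z < 1 -> is_derive f z (f1 z) /\ is_derive f1 z (f2 z).

Definition convex_order_on (F : (C -> C) -> Prop) (alpha r : R) : Prop :=
  forall f f1 f2 : C -> C, F f -> derivs_on_disk f f1 f2 ->
    forall z : C, Cmod z < r ->
      f1 z <> 0%C /\ alpha < Re (1 + z * f2 z / f1 z)%C.

Definition unif_convex_on (F : (C -> C) -> Prop) (r : R) : Prop :=
  forall f f1 f2 : C -> C, F f -> derivs_on_disk f f1 f2 ->
    forall z : C, Cmod z < r ->
      f1 z <> 0%C /\ Cmod (z * f2 z / f1 z)%C < Re (1 + z * f2 z / f1 z)%C.

Definition radius_convexity (F : (C -> C) -> Prop) (alpha : R) : Rbar :=
  Lub_Rbar (fun r => 0 < r <= 1 /\ convex_order_on F alpha r).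

Definition radius_unif_convexity (F : (C -> C) -> Prop) : Rbar :=
  Lub_Rbar (fun r => 0 < r <= 1 /\ unif_convex_on F r).

Definition r0_eq (b M alpha r : R) : Prop :=
  ((1 - alpha) * (1 + M) - 2 * (2 - alpha) * (2 * b - M) * r) * (1 - r) ^ 3
  = M * (1 - alpha + (1 + alpha) * r).

(* r0 is "the" real root in (0,1): a root in (0,1) with no smaller root in (0,1). *)
Definition is_r0 (b M alpha r0 : R) : Prop :=
  0 < r0 < 1 /\ r0_eq b M alpha r0 /\ (forall r, 0 < r < r0 -> ~ r0_eq b M alpha r).

Definition f0 (b M : R) (z : C) : C :=
  (z - RtoC (2 * b) * z * z - RtoC M * (z * z * z) / (1 - z))%C.

(* Main.v *)
Require Import Defs.
From Stdlib Require Import Reals Lra Lia Psatz ClassicalEpsilon.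
From Coquelicot Require Import Coquelicot.
Open Scope R_scope.

Lemma lim_ratio (p : nat) :
  is_lim_seq (fun n => ((INR n + 2) / (INR n + 1)) ^ p) 1.
Proof.
  assert (H1 : is_lim_seq (fun n => (INR n + 2) / (INR n + 1)) 1).
  { apply is_lim_seq_ext with (fun n => 1 + / (INR n + 1)).
    - intros n. pose proof (pos_INR n). field. lra.
    - cut (is_lim_seq (fun n => 1 + / (INR n + 1)) (1 + 0)).
      { rewrite Rplus_0_r. auto. }
      apply is_lim_seq_plus'. apply is_lim_seq_const.
      assert (H : is_lim_seq (fun n => INR n + 1) p_infty).
      { eapply is_lim_seq_plus. apply is_lim_seq_INR. apply is_lim_seq_const.
        simpl. reflexivity. }
      pose proof (is_lim_seq_inv _ _ H) as H2. simpl in H2. apply H2. discriminate. }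
  induction p.
  - simpl. apply is_lim_seq_const.
  - simpl. cut (is_lim_seq (fun n => (INR n + 2) / (INR n + 1) * ((INR n + 2) / (INR n + 1)) ^ p) (1*1)).
    { rewrite Rmult_1_l. auto. }
    apply is_lim_seq_mult'; auto.
Qed.

Lemma ex_series_poly (p : nat) (r : R) : 0 <= r < 1 ->
  ex_series (fun n => (INR n + 1) ^ p * r ^ n).
Proof.
  intros Hr.
  set (s := (1 + r) / 2).
  assert (Hs : 0 < s < 1) by (unfold s; lra).
  assert (E : ex_series (fun n => Rabs ((INR n + 1) ^ p * s ^ n))).
  { apply ex_series_DAlembert with s. lra.
    - intros n. apply Rmult_integral_contrapositive; split; apply pow_nonzero;
      pose proof (pos_INR n); lra.
    - apply is_lim_seq_ext with (fun n => ((INR n + 2) / (INR n + 1)) ^ p * s).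
      + intros n. pose proof (pos_INR n).
        rewrite S_INR. rewrite Rabs_pos_eq.
        * simpl. unfold Rdiv. rewrite Rpow_mult_distr, pow_inv.
          replace (INR n + 1 + 1) with (INR n + 2) by ring. field.
          split; apply pow_nonzero; lra.
        * apply Rmult_le_pos. apply Rmult_le_pos. apply pow_le; lra.
          apply pow_le; lra.
          apply Rlt_le, Rinv_0_lt_compat. apply Rmult_lt_0_compat.
          apply pow_lt; lra. apply pow_lt; lra.
      + cut (is_lim_seq (fun n => ((INR n + 2) / (INR n + 1)) ^ p * s) (Rbar_mult 1 s)).
        { simpl. rewrite Rmult_1_l. auto. }
        apply is_lim_seq_scal_r. apply lim_ratio. }
  apply (ex_series_le (K:=R_AbsRing) (V:=R_CompleteNormedModule) _ (fun n => Rabs ((INR n + 1) ^ p * s ^ n))); auto.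
  intros n. rewrite <- Rabs_Rabsolu. change norm with Rabs.
  rewrite !Rabs_mult, <- !RPow_abs. pose proof (pos_INR n).
  rewrite Rabs_Rabsolu.
  apply Rmult_le_compat_l. apply pow_le; apply Rabs_pos.
  rewrite (Rabs_pos_eq r) by lra.
  apply pow_incr. rewrite (Rabs_pos_eq r), (Rabs_pos_eq s); unfold s; lra.
Qed.

Lemma Cmod_pow_n (z : C) (n : nat) : Cmod (pow_n z n) = Cmod z ^ n.
Proof.
  induction n; simpl. apply Cmod_1.
  change (mult z (pow_n z n)) with (z * pow_n z n)%C.
  rewrite Cmod_mult, IHn. reflexivity.
Qed.

Lemma Cnorm (x : C) : @norm C_AbsRing C_NormedModule x = Cmod x.
Proof. reflexivity. Qed.

Lemma series_norm_le (u : nat -> C) (v : nat -> R) (l : C) (m : R) :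
  is_series u l -> is_series v m -> (forall n, Cmod (u n) <= v n) -> Cmod l <= m.
Proof.
  intros Hu Hv Hb.
  assert (Hs : forall N, norm (sum_n u N) <= sum_n v N).
  { induction N. rewrite !sum_O. rewrite Cnorm. apply Hb.
    rewrite !sum_Sn. rewrite Cnorm in *.
    change (plus (sum_n u N) (u (S N))) with (sum_n u N + u (S N))%C.
    eapply Rle_trans. apply Cmod_triangle.
    change (plus (sum_n v N) (v (S N))) with (sum_n v N + v (S N)).
    specialize (Hb (S N)). lra. }
  rewrite <- Cnorm.
  change (Rbar_le (norm l) m).
  eapply (filterlim_le (F := eventually)) with (f := fun N => norm (sum_n u N)) (g := sum_n v).
  - exists O. intros; apply Hs.
  - eapply filterlim_comp. apply Hu. apply filterlim_norm.
  - apply Hv.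
Qed.

Definition csum (u : nat -> C) : C := @epsilon C (inhabits (RtoC 0)) (fun l : C => is_series u l).

Lemma csum_spec (u : nat -> C) : ex_series u -> is_series u (csum u).
Proof. intros H. unfold csum. apply epsilon_spec. exact H. Qed.

Lemma RtoC_sum_n (u : nat -> R) N : sum_n (fun n => RtoC (u n)) N = RtoC (sum_n u N).
Proof.
  induction N. rewrite !sum_O. reflexivity.
  rewrite !sum_Sn, IHN. change (plus (sum_n u N) (u (S N))) with (sum_n u N + u (S N)).
  rewrite <- RtoC_plus. reflexivity.
Qed.

Lemma RtoC_series (u : nat -> R) (l : R) : is_series u l -> is_series (fun n => RtoC (u n)) (RtoC l).
Proof.
  intros H. unfold is_series.
  apply filterlim_ext with (fun N => RtoC (sum_n u N)).
  intros; symmetry; apply RtoC_sum_n.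
  eapply filterlim_comp. apply H.
  intros P [eps Heps]. exists eps. intros y Hy. apply Heps.
  split. exact Hy. simpl. apply ball_center.
Qed.

Definition Eterm (w z : C) (n : nat) : C :=
  (pow_n w n - pow_n z n - (w - z) * RtoC (INR n) * pow_n z (pred n))%C.

Lemma pow_n_S (z : C) n : pow_n z (S n) = (z * pow_n z n)%C.
Proof. reflexivity. Qed.

Lemma Eterm_rec (w z : C) (n : nat) :
  Eterm w z (S n) = (w * Eterm w z n + RtoC (INR n) * pow_n z (pred n) * (w - z) * (w - z))%C.
Proof.
  unfold Eterm. destruct n.
  - simpl pred. rewrite !pow_n_S. simpl pow_n. rewrite !S_INR. simpl INR.
    change (@one C_Ring) with (RtoC 1). rewrite Rplus_0_l. ring.
  - simpl pred. rewrite !pow_n_S. rewrite !S_INR. rewrite !RtoC_plus. ring.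
Qed.

Lemma Eterm_bound (w z : C) (r : R) (n : nat) :
  0 < r -> Cmod w <= r -> Cmod z <= r ->
  r ^ 2 * Cmod (Eterm w z n) <= INR n ^ 2 * r ^ n * Cmod (w - z) ^ 2.
Proof.
  intros Hr Hw Hz. induction n.
  - unfold Eterm. simpl pow_n. simpl INR. simpl pred. change (@one C_Ring) with (RtoC 1).
    replace (RtoC 1 - RtoC 1 - (w - z) * RtoC 0 * RtoC 1)%C with (RtoC 0) by ring.
    rewrite Cmod_0. simpl. nra.
  - rewrite Eterm_rec.
    set (h := Cmod (w - z)) in *.
    assert (Hh : 0 <= h) by apply Cmod_ge_0.
    assert (Hn := pos_INR n).
    assert (HE := Cmod_ge_0 (Eterm w z n)).
    assert (T : Cmod (w * Eterm w z n + RtoC (INR n) * pow_n z (pred n) * (w - z) * (w - z))%C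
               <= r * Cmod (Eterm w z n) + INR n * Cmod z ^ pred n * h ^ 2).
    { eapply Rle_trans. apply Cmod_triangle. rewrite !Cmod_mult, Cmod_pow_n, Cmod_R, Rabs_pos_eq by lra.
      fold h. apply Rplus_le_compat. apply Rmult_le_compat_r; lra. right; ring. }
    assert (T2 : r ^ 2 * (INR n * Cmod z ^ pred n) <= INR n * r ^ S n).
    { destruct n. simpl. lra.
      simpl pred. replace (r ^ S (S n)) with (r ^ 2 * r ^ n) by (simpl; ring).
      assert (Cmod z ^ n <= r ^ n) by (apply pow_incr; split; [apply Cmod_ge_0|lra]).
      assert (0 <= INR (S n)) by apply pos_INR.
      replace (INR (S n) * (r ^ 2 * r ^ n)) with (r ^ 2 * (INR (S n) * r ^ n)) by ring.
      apply Rmult_le_compat_l. nra. apply Rmult_le_compat_l; lra. }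
    rewrite S_INR.
    assert (0 <= r ^ n) by (apply pow_le; lra).
    assert (0 <= h ^ 2) by (apply pow_le; lra).
    apply Rle_trans with (r ^ 2 * (r * Cmod (Eterm w z n) + INR n * Cmod z ^ pred n * h ^ 2)).
    apply Rmult_le_compat_l. nra. exact T.
    replace (r ^ 2 * (r * Cmod (Eterm w z n) + INR n * Cmod z ^ pred n * h ^ 2))
      with (r * (r ^ 2 * Cmod (Eterm w z n)) + (r ^ 2 * (INR n * Cmod z ^ pred n)) * h ^ 2) by ring.
    simpl (r ^ S n).
    apply Rle_trans with (r * (INR n ^ 2 * r ^ n * h ^ 2) + INR n * (r * r ^ n) * h ^ 2).
    apply Rplus_le_compat. apply Rmult_le_compat_l; lra.
    apply Rmult_le_compat_r; auto.
    assert (0 <= r * r ^ n * h ^ 2) by (apply Rmult_le_pos; [apply Rmult_le_pos|]; lra).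
    replace (r * (INR n ^ 2 * r ^ n * h ^ 2) + INR n * (r * r ^ n) * h ^ 2)
      with ((INR n ^ 2 + INR n) * (r * r ^ n * h ^ 2)) by ring.
    replace ((INR n + 1) ^ 2 * (r * r ^ n) * h ^ 2) with ((INR n + 1) ^ 2 * (r * r ^ n * h ^ 2)) by ring.
    apply Rmult_le_compat_r; nra.
Qed.

Lemma Cplus_eq (a b : C) : @plus (NormedModule.AbelianMonoid C_AbsRing C_NormedModule) a b = (a + b)%C.
Proof. reflexivity. Qed.
Lemma Cscal_eq (a b : C) : @scal C_AbsRing (NormedModule.ModuleSpace C_AbsRing C_NormedModule) a b = (a * b)%C.
Proof. reflexivity. Qed.
Lemma Copp_eq (a : C) : @opp (NormedModule.AbelianGroup C_AbsRing C_NormedModule) a = (- a)%C.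
Proof. reflexivity. Qed.

Definition PS (c : nat -> C) (w : C) : C := csum (fun n => (c n * pow_n w n)%C).
Definition dcoef (c : nat -> C) (n : nat) : C := (RtoC (INR (S n)) * c (S n))%C.

Lemma ex_series_coef (c : nat -> C) (K : R) (p : nat) (w : C) :
  (forall n, Cmod (c n) <= K * (INR n + 1) ^ p) -> Cmod w < 1 ->
  ex_series (fun n => (c n * pow_n w n)%C).
Proof.
  intros Hc Hw.
  apply (ex_series_le (K := C_AbsRing) (V := C_CompleteNormedModule) _
          (fun n => K * ((INR n + 1) ^ p * Cmod w ^ n))).
  - intros n. rewrite Cnorm, Cmod_mult, Cmod_pow_n.
    replace (K * ((INR n + 1) ^ p * Cmod w ^ n)) with ((K * (INR n + 1) ^ p) * Cmod w ^ n) by ring.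
    apply Rmult_le_compat_r. apply pow_le, Cmod_ge_0. apply Hc.
  - apply (ex_series_scal_l (K := R_AbsRing) (V := R_NormedModule) K).
    apply ex_series_poly. split. apply Cmod_ge_0. exact Hw.
Qed.

Lemma PS_spec (c : nat -> C) (K : R) (p : nat) (w : C) :
  (forall n, Cmod (c n) <= K * (INR n + 1) ^ p) -> Cmod w < 1 ->
  is_series (fun n => (c n * pow_n w n)%C) (PS c w).
Proof. intros; apply csum_spec; eapply ex_series_coef; eauto. Qed.

Lemma K_nonneg (c : nat -> C) (K : R) (p : nat) :
  (forall n, Cmod (c n) <= K * (INR n + 1) ^ p) -> 0 <= K.
Proof.
  intros Hc. specialize (Hc O). simpl INR in Hc. rewrite Rplus_0_l, pow1 in Hc.
  pose proof (Cmod_ge_0 (c O)). lra.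
Qed.

Lemma dcoef_bound (c : nat -> C) (K : R) (p : nat) :
  (forall n, Cmod (c n) <= K * (INR n + 1) ^ p) ->
  forall n, Cmod (dcoef c n) <= (K * 2 ^ p) * (INR n + 1) ^ (S p).
Proof.
  intros Hc n. pose proof (K_nonneg _ _ _ Hc) as HK. unfold dcoef.
  rewrite Cmod_mult, Cmod_R, Rabs_pos_eq by apply pos_INR.
  rewrite S_INR. pose proof (pos_INR n).
  specialize (Hc (S n)). rewrite S_INR in Hc.
  assert (H2 : (INR n + 1 + 1) ^ p <= 2 ^ p * (INR n + 1) ^ p).
  { rewrite <- Rpow_mult_distr. apply pow_incr. lra. }
  simpl (_ ^ S p).
  apply Rle_trans with ((INR n + 1) * (K * (INR n + 1 + 1) ^ p)).
  apply Rmult_le_compat_l; lra.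
  replace (K * 2 ^ p * ((INR n + 1) * (INR n + 1) ^ p)) with ((INR n + 1) * (K * (2 ^ p * (INR n + 1) ^ p))) by ring.
  apply Rmult_le_compat_l. lra. apply Rmult_le_compat_l; lra.
Qed.

Lemma Cnorm' (x : C) : @norm C_AbsRing (AbsRing_NormedModule C_AbsRing) x = Cmod x.
Proof. reflexivity. Qed.

Lemma Eterm_comb (cn y z : C) (m : nat) :
  (cn * pow_n y m + - (cn * pow_n z m) + - ((y - z) * (RtoC (INR m) * cn * pow_n z (pred m))))%C
  = (cn * Eterm y z m)%C.
Proof. unfold Eterm. ring. Qed.

Lemma PS_deriv (c : nat -> C) (K : R) (p : nat) :
  (forall n, Cmod (c n) <= K * (INR n + 1) ^ p) ->
  forall z, Cmod z < 1 -> is_derive (PS c) z (PS (dcoef c) z).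
Proof.
  intros Hc z Hz.
  pose proof (K_nonneg _ _ _ Hc) as HK.
  set (r := (1 + Cmod z) / 2).
  assert (Hr : 0 < r < 1) by (unfold r; pose proof (Cmod_ge_0 z); lra).
  assert (Hzr : Cmod z < r) by (unfold r; lra).
  set (D := PS (dcoef c) z).
  assert (HD : is_series (fun n => (dcoef c n * pow_n z n)%C) D).
  { apply (PS_spec _ (K * 2 ^ p) (S p)); auto. apply dcoef_bound; auto. }
  assert (HD' : is_series (fun n => (RtoC (INR n) * c n * pow_n z (pred n))%C) D).
  { apply is_series_decr_1.
    assert (E0 : (RtoC (INR 0) * c 0%nat * pow_n z (pred 0))%C = RtoC 0).
    { simpl INR. rewrite Cmult_0_l, Cmult_0_l. reflexivity. }
    rewrite E0, Copp_eq, Cplus_eq, Copp_0, Cplus_0_r.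
    eapply is_series_ext. 2: apply HD. intros n. reflexivity. }
  assert (Hmaj : ex_series (fun n => K * ((INR n + 1) ^ (p + 2) * r ^ n))).
  { apply (ex_series_scal_l (K := R_AbsRing) (V := R_NormedModule) K).
    apply ex_series_poly. lra. }
  set (Sb := Series (fun n => K * ((INR n + 1) ^ (p + 2) * r ^ n))).
  assert (HSb : is_series (fun n => K * ((INR n + 1) ^ (p + 2) * r ^ n)) Sb)
    by (apply Series_correct; auto).
  split. apply is_linear_scal_l.
  intros x Hx. apply (is_filter_lim_locally_unique (K:=C_AbsRing) (V:=AbsRing_NormedModule C_AbsRing)) in Hx. rewrite <- Hx. clear x Hx.
  intros eps. apply (locally_le_locally_norm (K:=C_AbsRing) (V:=AbsRing_NormedModule C_AbsRing)).
  set (B := Rabs Sb / r ^ 2).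
  assert (HB : 0 <= B).
  { unfold B. apply Rmult_le_pos. apply Rabs_pos. apply Rlt_le, Rinv_0_lt_compat, pow_lt; lra. }
  assert (Hd : 0 < Rmin (r - Cmod z) (eps / (B + 1))).
  { apply Rmin_pos. lra. apply Rdiv_lt_0_compat. apply cond_pos. lra. }
  exists (mkposreal _ Hd). intros y Hy. unfold ball_norm in Hy. simpl in Hy.
  rewrite Cnorm' in Hy. change (minus y z) with (y - z)%C in Hy.
  set (h := Cmod (y - z)) in *.
  assert (Hh1 : h < r - Cmod z) by (eapply Rlt_le_trans; [apply Hy| apply Rmin_l]).
  assert (Hh2 : h < eps / (B + 1)) by (eapply Rlt_le_trans; [apply Hy| apply Rmin_r]).
  assert (Hh0 : 0 <= h) by apply Cmod_ge_0.
  assert (Hy1 : Cmod y < r).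
  { replace y with (z + (y - z))%C by ring. eapply Rle_lt_trans. apply Cmod_triangle. fold h. lra. }
  assert (HFy := PS_spec c K p y Hc ltac:(lra)).
  assert (HFz := PS_spec c K p z Hc Hz).
  assert (Hcomb := is_series_minus _ _ _ _ (is_series_minus _ _ _ _ HFy HFz) (is_series_scal (y - z)%C _ _ HD')).
  rewrite !Cnorm'. change (minus y z) with (y - z)%C. fold h.
  change (minus (minus (PS c y) (PS c z)) (scal (y - z)%C D))
    with (plus (plus (PS c y) (opp (PS c z))) (opp (scal (y - z)%C D))).
  apply Rle_trans with (h ^ 2 / r ^ 2 * Sb).
  - eapply series_norm_le. apply Hcomb.
    apply (is_series_scal (K := R_AbsRing) (V := R_NormedModule) (h ^ 2 / r ^ 2)). apply HSb.
    intros n. cbv beta. change (Cmod (c n * pow_n y n + - (c n * pow_n z n) + - ((y - z) * (RtoC (INR n) * c n * pow_n z (pred n))))%C <= scal (h ^ 2 / r ^ 2) (K * ((INR n + 1) ^ (p + 2) * r ^ n))).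
    rewrite Eterm_comb.
    change (scal (h ^ 2 / r ^ 2) (K * ((INR n + 1) ^ (p + 2) * r ^ n)))
      with (h ^ 2 / r ^ 2 * (K * ((INR n + 1) ^ (p + 2) * r ^ n))).
    rewrite Cmod_mult.
    assert (HE := Eterm_bound y z r n ltac:(lra) ltac:(lra) ltac:(lra)). fold h in HE.
    assert (HE' : Cmod (Eterm y z n) <= (INR n + 1) ^ 2 * r ^ n * h ^ 2 / r ^ 2).
    { assert (0 < r ^ 2) by (apply pow_lt; lra).
      apply Rmult_le_reg_l with (r ^ 2). auto.
      field_simplify. 2: lra.
      eapply Rle_trans. apply HE. pose proof (pos_INR n).
      assert (0 <= r ^ n * h ^ 2) by (apply Rmult_le_pos; apply pow_le; lra).
      nra. }
    rewrite pow_add.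
    apply Rle_trans with ((K * (INR n + 1) ^ p) * ((INR n + 1) ^ 2 * r ^ n * h ^ 2 / r ^ 2)).
    apply Rmult_le_compat; auto using Cmod_ge_0.
    right. field. lra.
  - assert (0 < r ^ 2) by (apply pow_lt; lra).
    apply Rle_trans with (h * (h * B)).
    { unfold B. unfold Rdiv. replace (h * (h * (Rabs Sb * / r ^ 2))) with (h ^ 2 * / r ^ 2 * Rabs Sb) by ring.
      apply Rmult_le_compat_l. apply Rmult_le_pos. apply pow_le; lra.
      apply Rlt_le, Rinv_0_lt_compat; lra. apply Rle_abs. }
    rewrite (Rmult_comm eps). apply Rmult_le_compat_l. lra.
    apply Rle_trans with (eps / (B + 1) * B). apply Rmult_le_compat_r; lra.
    assert (0 < eps) by apply cond_pos.
    apply Rmult_le_reg_l with (B + 1). lra.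
    field_simplify. nra. lra.
Qed.

Lemma Rplus_eq' (a b : R) : @plus (NormedModule.AbelianMonoid R_AbsRing R_NormedModule) a b = a + b.
Proof. reflexivity. Qed.
Lemma Ropp_eq' (a : R) : @opp (NormedModule.AbelianGroup R_AbsRing R_NormedModule) a = - a.
Proof. reflexivity. Qed.
Lemma Rscal_eq' (a b : R) : @scal R_AbsRing (NormedModule.ModuleSpace R_AbsRing R_NormedModule) a b = a * b.
Proof. reflexivity. Qed.

Lemma shift_trick (a : nat -> R) (r l : R) :
  is_series (fun n => a n * r ^ n) l ->
  is_series (fun n => (a n - match n with O => 0 | S m => a m end) * r ^ n) (l - r * l).
Proof.
  intros H.
  assert (H2 : is_series (fun n => match n with O => 0 | S m => a m end * r ^ n) (r * l)).
  { apply is_series_decr_1. 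
    rewrite Rplus_eq', Ropp_eq'.
    replace (r * l + - (0 * r ^ 0)) with (r * l) by ring.
    eapply is_series_ext. 2: apply (is_series_scal (K:=R_AbsRing) (V:=R_NormedModule) r _ _ H).
    intros n. rewrite Rscal_eq'. change (@eq R (r * (a n * r ^ n)) (a n * r ^ S n)). simpl. ring. }
  pose proof (is_series_minus _ _ _ _ H H2) as H3.
  eapply is_series_ext. 2: apply H3.
  intros n. cbv beta. rewrite Rplus_eq', Ropp_eq'.
  change (@eq R (a n * r ^ n + - (match n with O => 0 | S m => a m end * r ^ n)) ((a n - match n with O => 0 | S m => a m end) * r ^ n)). ring.
Qed.

Lemma series_uniq (u : nat -> R) l1 l2 : is_series u l1 -> is_series u l2 -> l1 = l2.
Proof. intros H1 H2. rewrite <- (is_series_unique _ _ H1). apply is_series_unique; auto. Qed.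

Lemma series_G (r : R) : 0 <= r < 1 ->
  is_series (fun n => (INR n + 1) * r ^ n) (/ (1 - r) ^ 2).
Proof.
  intros Hr.
  pose proof (ex_series_poly 1 r Hr) as E.
  set (g := Series (fun n => (INR n + 1) ^ 1 * r ^ n)).
  assert (Hg : is_series (fun n => (INR n + 1) * r ^ n) g).
  { eapply is_series_ext. 2: apply Series_correct, E. intros n. simpl. ring. }
  pose proof (shift_trick (fun n => INR n + 1) r g Hg) as H.
  assert (Hgeom := is_series_geom r ltac:(rewrite Rabs_pos_eq; lra)).
  assert (Eq : g - r * g = / (1 - r)).
  { eapply series_uniq. apply H. eapply is_series_ext. 2: apply Hgeom.
    intros [|n]. simpl. ring. rewrite S_INR. simpl. ring. }
  replace (/ (1 - r) ^ 2) with g. auto.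
  apply Rmult_eq_reg_l with (1 - r). 2: lra.
  replace ((1 - r) * g) with (g - r * g) by ring. rewrite Eq. field. lra.
Qed.

Lemma series_H (r : R) : 0 <= r < 1 ->
  is_series (fun n => (INR n + 1) * (INR n + 2) * r ^ n) (2 / (1 - r) ^ 3).
Proof.
  intros Hr.
  assert (E : ex_series (fun n => (INR n + 1) * (INR n + 2) * r ^ n)).
  { apply (ex_series_le (K:=R_AbsRing) (V:=R_CompleteNormedModule) _ (fun n => 2 * ((INR n + 1) ^ 2 * r ^ n))).
    intros n. change norm with Rabs. pose proof (pos_INR n).
    assert (0 <= r ^ n) by (apply pow_le; lra).
    rewrite Rabs_pos_eq. simpl. nra. apply Rmult_le_pos; [|lra]. nra.
    apply (ex_series_scal_l (K := R_AbsRing) (V := R_NormedModule) 2).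
    apply ex_series_poly; auto. }
  set (h := Series (fun n => (INR n + 1) * (INR n + 2) * r ^ n)).
  assert (Hh : is_series (fun n => (INR n + 1) * (INR n + 2) * r ^ n) h) by (apply Series_correct, E).
  pose proof (shift_trick (fun n => (INR n + 1) * (INR n + 2)) r h Hh) as H.
  pose proof (is_series_scal (K:=R_AbsRing) (V:=R_NormedModule) 2 _ _ (series_G r Hr)) as HG.
  assert (Eq : h - r * h = 2 * / (1 - r) ^ 2).
  { eapply series_uniq. apply H. eapply is_series_ext. 2: apply HG.
    intros [|n]; rewrite Rscal_eq'. simpl. ring.
    rewrite !S_INR. simpl. ring. }
  replace (2 / (1 - r) ^ 3) with h. auto.
  apply Rmult_eq_reg_l with (1 - r). 2: lra.
  replace ((1 - r) * h) with (h - r * h) by ring. rewrite Eq. field. lra.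
Qed.

Lemma Cseries_uniq (u : nat -> C) (l1 l2 : C) : is_series u l1 -> is_series u l2 -> l1 = l2.
Proof.
  intros H1 H2. eapply (filterlim_locally_unique (K:=C_AbsRing) (V:=C_NormedModule) (F:=eventually)); eauto.
Qed.

Lemma locally_disk (z : C) (P : C -> Prop) : Cmod z < 1 ->
  (forall w, Cmod w < 1 -> P w) -> @locally (AbsRing_UniformSpace C_AbsRing) z P.
Proof.
  intros Hz HP.
  apply (locally_le_locally_norm (K:=C_AbsRing) (V:=AbsRing_NormedModule C_AbsRing)).
  assert (Hd : 0 < 1 - Cmod z) by lra.
  exists (mkposreal _ Hd). intros y Hy. unfold ball_norm in Hy. simpl in Hy.
  rewrite Cnorm' in Hy. change (minus y z) with (y - z)%C in Hy.
  apply HP. replace y with (z + (y - z))%C by ring. eapply Rle_lt_trans. apply Cmod_triangle. lra.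
Qed.

Lemma deriv_ident (f g f1 : C -> C) (l : C) (z : C) : Cmod z < 1 ->
  (forall w, Cmod w < 1 -> g w = f w) -> is_derive g z l -> is_derive f z (f1 z) -> f1 z = l.
Proof.
  intros Hz Heq Hg Hf.
  assert (Hf' : is_derive f z l).
  { eapply is_derive_ext_loc. 2: apply Hg. apply locally_disk; auto. }
  rewrite <- (is_C_derive_unique _ _ _ Hf). apply is_C_derive_unique; auto.
Qed.

Definition coef_bounded (a : nat -> C) (K : R) := forall n, Cmod (a n) <= K * (INR n + 1) ^ 0.

Lemma derivs_PS (a : nat -> C) (K : R) (f f1 f2 : C -> C) :
  coef_bounded a K -> taylor_on_disk a f -> derivs_on_disk f f1 f2 ->
  forall z, Cmod z < 1 -> f1 z = PS (dcoef a) z /\ f2 z = PS (dcoef (dcoef a)) z.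
Proof.
  intros Ha Ht Hd.
  assert (Hf : forall w, Cmod w < 1 -> PS a w = f w).
  { intros w Hw. eapply Cseries_uniq. apply (PS_spec a K 0); auto. apply Ht; auto. }
  assert (H1 : forall w, Cmod w < 1 -> f1 w = PS (dcoef a) w).
  { intros w Hw. eapply deriv_ident; eauto. apply (PS_deriv a K 0); auto. apply Hd; auto. }
  intros z Hz. split. auto.
  apply (deriv_ident f1 (PS (dcoef a)) f2 _ z Hz).
  intros w Hw; symmetry; auto.
  apply (PS_deriv _ (K * 2 ^ 0) 1). apply dcoef_bound; auto. auto. apply Hd; auto.
Qed.

Lemma sum_n_1C (t : nat -> C) : sum_n t 1 = (t 0%nat + t 1%nat)%C.
Proof. rewrite sum_Sn, sum_O. reflexivity. Qed.
Lemma sum_n_1R (t : nat -> R) : sum_n t 1 = t 0%nat + t 1%nat.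
Proof. rewrite sum_Sn, sum_O. reflexivity. Qed.

Lemma tail2C (t : nat -> C) (D : C) : is_series t D ->
  is_series (fun k => t (2 + k)%nat) (D - (t 0%nat + t 1%nat))%C.
Proof.
  intros H. apply is_series_incr_n. lia. simpl pred. rewrite sum_n_1C.
  change (is_series t ((D - (t 0%nat + t 1%nat)) + (t 0%nat + t 1%nat))%C).
  replace ((D - (t 0%nat + t 1%nat)) + (t 0%nat + t 1%nat))%C with D by ring. exact H.
Qed.

Lemma tail1C (t : nat -> C) (D : C) : is_series t D ->
  is_series (fun k => t (1 + k)%nat) (D - t 0%nat)%C.
Proof.
  intros H. apply is_series_incr_n. lia. simpl pred. rewrite sum_O.
  change (is_series t ((D - t 0%nat) + t 0%nat)%C).
  replace ((D - t 0%nat) + t 0%nat)%C with D by ring. exact H.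
Qed.

Lemma tail2R (t : nat -> R) (D : R) : is_series t D ->
  is_series (fun k => t (2 + k)%nat) (D - (t 0%nat + t 1%nat)).
Proof.
  intros H. apply is_series_incr_n. lia. simpl pred. rewrite sum_n_1R.
  change (is_series t ((D - (t 0%nat + t 1%nat)) + (t 0%nat + t 1%nat))).
  replace ((D - (t 0%nat + t 1%nat)) + (t 0%nat + t 1%nat)) with D by ring. exact H.
Qed.

Lemma tail1R (t : nat -> R) (D : R) : is_series t D ->
  is_series (fun k => t (1 + k)%nat) (D - t 0%nat).
Proof.
  intros H. apply is_series_incr_n. lia. simpl pred. rewrite sum_O.
  change (is_series t ((D - t 0%nat) + t 0%nat)).
  replace ((D - t 0%nat) + t 0%nat) with D by ring. exact H.
Qed.

Lemma Cmod_INR (n : nat) : Cmod (RtoC (INR n)) = INR n.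
Proof. rewrite Cmod_R. apply Rabs_pos_eq, pos_INR. Qed.

Lemma bound1 (a : nat -> C) (K b M : R) (z : C) :
  coef_bounded a K -> a 1%nat = RtoC 1 -> Cmod (a 2%nat) = 2 * b ->
  (forall n, (3 <= n)%nat -> Cmod (a n) <= M) -> Cmod z < 1 ->
  Cmod (PS (dcoef a) z - 1) <= 4 * b * Cmod z + M * (/ (1 - Cmod z) ^ 2 - 1 - 2 * Cmod z).
Proof.
  intros HK H1 H2 HM Hz.
  set (r := Cmod z). assert (Hr : 0 <= r < 1) by (split; [apply Cmod_ge_0|auto]).
  assert (HD := PS_spec (dcoef a) (K * 2 ^ 0) 1 z (dcoef_bound a K 0 HK) Hz).
  pose proof (tail2C _ _ HD) as Ht.
  pose proof (tail2R _ _ (series_G r Hr)) as HG.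
  assert (Hl : Cmod (PS (dcoef a) z - (dcoef a 0 * pow_n z 0 + dcoef a 1 * pow_n z 1))%C
               <= M * (/ (1 - r) ^ 2 - ((INR 0 + 1) * r ^ 0 + (INR 1 + 1) * r ^ 1))).
  { eapply series_norm_le. apply Ht.
    apply (is_series_scal (K:=R_AbsRing) (V:=R_NormedModule) M). apply HG.
    intros k. cbv beta. rewrite Rscal_eq'. unfold dcoef.
    rewrite !Cmod_mult, Cmod_INR, Cmod_pow_n. fold r.
    rewrite (S_INR (2 + k)).
    assert (0 <= r ^ (2 + k)) by (apply pow_le; lra).
    assert (0 <= INR (2 + k)) by apply pos_INR.
    assert (Cmod (a (S (2 + k))) <= M) by (apply HM; lia).
    pose proof (Cmod_ge_0 (a (S (2 + k)))).
    replace (M * ((INR (2 + k) + 1) * r ^ (2 + k))) with ((INR (2 + k) + 1) * M * r ^ (2 + k)) by ring.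
    apply Rmult_le_compat_r; auto. apply Rmult_le_compat_l; lra. }
  replace (PS (dcoef a) z - 1)%C with
    ((PS (dcoef a) z - (dcoef a 0 * pow_n z 0 + dcoef a 1 * pow_n z 1)) + dcoef a 1 * pow_n z 1)%C.
  2:{ unfold dcoef at 2. simpl INR. rewrite H1. simpl pow_n. change (@one C_Ring) with (RtoC 1).
      ring. }
  eapply Rle_trans. apply Cmod_triangle.
  assert (E1 : Cmod (dcoef a 1 * pow_n z 1) = 4 * b * r).
  { unfold dcoef. rewrite Cmod_mult, Cmod_mult, Cmod_INR, Cmod_pow_n, H2. fold r. simpl. ring. }
  rewrite E1.
  replace (M * (/ (1 - r) ^ 2 - ((INR 0 + 1) * r ^ 0 + (INR 1 + 1) * r ^ 1)))
    with (M * (/ (1 - r) ^ 2 - 1 - 2 * r)) in Hl by (simpl; ring).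
  lra.
Qed.

Lemma bound2 (a : nat -> C) (K b M : R) (z : C) :
  coef_bounded a K -> Cmod (a 2%nat) = 2 * b ->
  (forall n, (3 <= n)%nat -> Cmod (a n) <= M) -> Cmod z < 1 ->
  Cmod (z * PS (dcoef (dcoef a)) z) <= 4 * b * Cmod z + M * Cmod z * (2 / (1 - Cmod z) ^ 3 - 2).
Proof.
  intros HK H2 HM Hz.
  set (r := Cmod z). assert (Hr : 0 <= r < 1) by (split; [apply Cmod_ge_0|auto]).
  assert (HD := PS_spec (dcoef (dcoef a)) (K * 2 ^ 0 * 2 ^ 1) 2 z
       (dcoef_bound _ _ 1 (dcoef_bound a K 0 HK)) Hz).
  pose proof (tail1C _ _ HD) as Ht.
  pose proof (tail1R _ _ (series_H r Hr)) as HH.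
  assert (Hl : Cmod (PS (dcoef (dcoef a)) z - dcoef (dcoef a) 0 * pow_n z 0)%C
               <= M * (2 / (1 - r) ^ 3 - (INR 0 + 1) * (INR 0 + 2) * r ^ 0)).
  { eapply series_norm_le. apply Ht.
    apply (is_series_scal (K:=R_AbsRing) (V:=R_NormedModule) M). apply HH.
    intros k. cbv beta. rewrite Rscal_eq'. unfold dcoef.
    rewrite !Cmod_mult, !Cmod_INR, Cmod_pow_n. fold r.
    rewrite (S_INR (S (1 + k))), (S_INR (1 + k)).
    assert (0 <= r ^ (1 + k)) by (apply pow_le; lra).
    assert (0 <= INR (1 + k)) by apply pos_INR.
    assert (Cmod (a (S (S (1 + k)))) <= M) by (apply HM; lia).
    pose proof (Cmod_ge_0 (a (S (S (1 + k))))).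
    replace (M * ((INR (1 + k) + 1) * (INR (1 + k) + 2) * r ^ (1 + k)))
      with ((INR (1 + k) + 1) * (INR (1 + k) + 1 + 1) * M * r ^ (1 + k)) by ring.
    apply Rmult_le_compat_r; auto. rewrite Rmult_assoc. apply Rmult_le_compat_l. lra.
    apply Rmult_le_compat_l; lra. }
  replace (z * PS (dcoef (dcoef a)) z)%C with
    (z * (PS (dcoef (dcoef a)) z - dcoef (dcoef a) 0 * pow_n z 0) + z * (dcoef (dcoef a) 0 * pow_n z 0))%C
    by ring.
  eapply Rle_trans. apply Cmod_triangle.
  assert (E1 : Cmod (z * (dcoef (dcoef a) 0 * pow_n z 0)) = 4 * b * r).
  { unfold dcoef. rewrite !Cmod_mult, !Cmod_INR, Cmod_pow_n, H2. fold r. simpl. ring. }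
  rewrite E1, Cmod_mult. fold r.
  replace (M * (2 / (1 - r) ^ 3 - (INR 0 + 1) * (INR 0 + 2) * r ^ 0))
    with (M * (2 / (1 - r) ^ 3 - 2)) in Hl by (simpl; ring).
  assert (r * Cmod (PS (dcoef (dcoef a)) z - dcoef (dcoef a) 0 * pow_n z 0) <= r * (M * (2 / (1 - r) ^ 3 - 2))).
  { apply Rmult_le_compat_l; lra. }
  lra.
Qed.

Definition Pp (b M alpha r : R) : R :=
  ((1 - alpha) * (1 + M) - 2 * (2 - alpha) * (2 * b - M) * r) * (1 - r) ^ 3
  - M * (1 - alpha + (1 + alpha) * r).

Definition N1 (b M r : R) := 4 * b * r + M * (/ (1 - r) ^ 2 - 1 - 2 * r).
Definition N2 (b M r : R) := 4 * b * r + M * r * (2 / (1 - r) ^ 3 - 2).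

Lemma Pp_ident b M alpha r : r < 1 ->
  (1 - alpha) * (1 - N1 b M r) - N2 b M r = Pp b M alpha r / (1 - r) ^ 3.
Proof. intros Hr. unfold N1, N2, Pp. field. lra. Qed.

Lemma Pp_pos b M alpha r0 : 0 <= alpha < 1 -> is_r0 b M alpha r0 ->
  forall r, 0 <= r < r0 -> 0 < Pp b M alpha r.
Proof.
  intros Ha [Hr0 [Heq Hmin]] r Hr.
  assert (P0 : Pp b M alpha 0 = 1 - alpha) by (unfold Pp; ring).
  destruct (Rlt_or_le 0 (Pp b M alpha r)) as [H|H]; auto.
  exfalso.
  assert (Hc : continuity (Pp b M alpha)).
  { intros x. apply continuity_pt_filterlim. change (continuous (Pp b M alpha) x). apply (ex_derive_continuous (K:=R_AbsRing) (V:=R_NormedModule)).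
    unfold Pp. auto_derive. auto. }
  destruct (IVT_cor (Pp b M alpha) 0 r Hc ltac:(lra)) as [x [Hx Hx0]].
  { rewrite P0. nra. }
  assert (x <> 0) by (intros ->; lra).
  apply (Hmin x). lra. unfold r0_eq. unfold Pp in Hx0. lra.
Qed.

Lemma Pp_r0 b M alpha r0 : is_r0 b M alpha r0 -> Pp b M alpha r0 = 0.
Proof. intros [_ [H _]]. unfold r0_eq in H. unfold Pp. lra. Qed.

Lemma key_ineq b M alpha r : 0 <= b -> 0 < M -> 0 <= alpha < 1 -> 0 <= r < 1 ->
  0 <= Pp b M alpha r ->
  0 < 1 - N1 b M r /\ N2 b M r <= (1 - alpha) * (1 - N1 b M r) /\ 0 <= N2 b M r /\
  (0 < Pp b M alpha r -> N2 b M r < (1 - alpha) * (1 - N1 b M r)).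
Proof.
  intros Hb HM Ha Hr HP.
  pose proof (Pp_ident b M alpha r ltac:(lra)) as E.
  assert (H3 : 0 < (1 - r) ^ 3) by (apply pow_lt; lra).
  assert (Hd : 0 <= Pp b M alpha r / (1 - r) ^ 3) by (apply Rmult_le_pos; [lra| apply Rlt_le, Rinv_0_lt_compat; lra]).
  assert (HN : 0 <= N2 b M r).
  { unfold N2. assert (2 / (1 - r) ^ 3 >= 2).
    { apply Rle_ge. apply Rmult_le_reg_r with ((1 - r) ^ 3); auto.
      unfold Rdiv. rewrite Rmult_assoc, Rinv_l by lra.
      assert ((1 - r) ^ 3 <= 1). { rewrite <- (pow1 3). apply pow_incr. lra. } nra. }
    assert (0 <= M * r * (2 / (1 - r) ^ 3 - 2)) by (apply Rmult_le_pos; nra). nra. }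
  assert (HD : 0 < 1 - N1 b M r).
  { destruct (Req_dec r 0) as [->|Hr0].
    - unfold N1. replace (1 - 0) with 1 by ring. rewrite pow1. lra.
    - assert (0 < N2 b M r).
      { unfold N2. assert (2 / (1 - r) ^ 3 > 2).
        { apply Rmult_lt_reg_r with ((1 - r) ^ 3); auto.
          unfold Rdiv. rewrite Rmult_assoc, Rinv_l by lra.
          assert ((1 - r) ^ 3 < 1).
          { replace ((1-r)^3) with ((1-r)*((1-r)*(1-r))) by ring.
            assert (0 < 1 - r < 1) by lra. nra. } nra. }
        assert (0 < M * r * (2 / (1 - r) ^ 3 - 2)).
        { apply Rmult_lt_0_compat. apply Rmult_lt_0_compat; lra. lra. } nra. }
      nra. }
  split; auto. split. lra. split; auto.
  intros HP'. assert (0 < Pp b M alpha r / (1 - r) ^ 3) by (apply Rdiv_lt_0_compat; lra). lra.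
Qed.

Lemma geomC (z : C) : Cmod z < 1 -> is_series (fun n => pow_n z n) (/ (1 - z))%C.
Proof.
  intros Hz.
  assert (E : ex_series (fun n => (RtoC 1 * pow_n z n)%C)).
  { apply (ex_series_coef _ 1 0). intros n. rewrite Cmod_1. simpl. lra. auto. }
  destruct E as [S HS].
  assert (HS' : is_series (fun n => pow_n z n) S).
  { eapply is_series_ext. 2: apply HS. intros n. cbv beta. change (@eq C (1 * pow_n z n)%C (pow_n z n)). ring. }
  assert (H1 := tail1C _ _ HS').
  assert (H2 := is_series_scal z _ _ HS').
  assert (Eq : (S - pow_n z 0)%C = (z * S)%C).
  { eapply Cseries_uniq. apply H1. eapply is_series_ext. 2: apply H2.
    intros n. cbv beta. rewrite Cscal_eq. reflexivity. }
  assert (Hz1 : (1 - z)%C <> RtoC 0).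
  { intros H. assert (z = RtoC 1).
    { replace z with (1 - (1 - z))%C by ring. rewrite H. ring. }
    subst. rewrite Cmod_1 in Hz. lra. }
  replace (/ (1 - z))%C with S. auto.
  simpl pow_n in Eq. change (@one C_Ring) with (RtoC 1) in Eq.
  change (@eq C S (/ (1 - z))%C).
  assert (E2 : ((1 - z) * S)%C = RtoC 1).
  { replace ((1 - z) * S)%C with ((S - RtoC 1) + RtoC 1 - z * S)%C by ring. rewrite Eq. ring. }
  replace S with ((/ (1 - z)) * ((1 - z) * S))%C. rewrite E2. ring.
  field. auto.
Qed.

Definition a0 (b M : R) (n : nat) : C :=
  match n with 0 => RtoC 0 | 1 => RtoC 1 | 2 => RtoC (- (2 * b)) | _ => RtoC (- M) end.

Lemma one_minus_nz (z : C) : Cmod z < 1 -> (1 - z)%C <> RtoC 0.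
Proof.
  intros Hz H. assert (z = RtoC 1).
  { replace z with (1 - (1 - z))%C by ring. rewrite H. ring. }
  subst. rewrite Cmod_1 in Hz. lra.
Qed.

Lemma f0_taylor b M : taylor_on_disk (a0 b M) (f0 b M).
Proof.
  intros z Hz. apply is_series_decr_n with 3%nat. lia.
  pose proof (is_series_scal (RtoC (- M) * pow_n z 3)%C _ _ (geomC z Hz)) as H.
  match goal with |- is_series _ ?L => replace L with (scal (RtoC (- M) * pow_n z 3)%C (/ (1 - z))%C) end.
  - eapply is_series_ext. 2: apply H. intros n. cbv beta. rewrite Cscal_eq.
    rewrite pow_n_plus. simpl a0. change (mult (pow_n z 3) (pow_n z n)) with (pow_n z 3 * pow_n z n)%C.
    change (@eq C (RtoC (- M) * pow_n z 3 * pow_n z n)%C (RtoC (- M) * (pow_n z 3 * pow_n z n))%C). ring.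
  - rewrite Cscal_eq. simpl pred. rewrite !sum_Sn, sum_O.
    pose proof (one_minus_nz z Hz).
    unfold f0. simpl.
    change (@eq C (RtoC (-M) * (z*(z*(z*1))) * /(1-z))%C
      ((z - RtoC (2*b) * z * z - RtoC M * (z*z*z)/(1-z)) + - ((RtoC 0 * 1 + RtoC 1 * (z * 1)) + RtoC (-(2*b)) * (z*(z*1))))%C).
    rewrite !RtoC_opp. field. auto.
Qed.

Lemma f0_classF b M : 0 <= b -> 0 < M -> class_F b M (f0 b M).
Proof.
  intros Hb HM. exists (a0 b M). split. apply f0_taylor.
  split. reflexivity. split. reflexivity. split.
  simpl. rewrite Cmod_R, Rabs_Ropp, Rabs_pos_eq; lra.
  intros n Hn. destruct n as [|[|[|n]]]; try lia. simpl.
  rewrite Cmod_R, Rabs_Ropp, Rabs_pos_eq; lra.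
Qed.

Lemma classF_bounded b M (a : nat -> C) : 0 <= b <= 1 -> 0 < M ->
  a 0%nat = RtoC 0 -> a 1%nat = RtoC 1 -> Cmod (a 2%nat) = 2 * b ->
  (forall n, (3 <= n)%nat -> Cmod (a n) <= M) -> coef_bounded a (2 + M).
Proof.
  intros Hb HM H0 H1 H2 H3 n. simpl. rewrite Rmult_1_r.
  destruct n as [|[|[|n]]].
  - rewrite H0, Cmod_0. lra.
  - rewrite H1, Cmod_1. lra.
  - lra.
  - assert (Cmod (a (S (S (S n)))) <= M) by (apply H3; lia). lra.
Qed.

Lemma pow_n_RtoC (x : R) n : pow_n (RtoC x) n = RtoC (x ^ n).
Proof.
  induction n. reflexivity. rewrite pow_n_S, IHn. simpl. rewrite RtoC_mult. reflexivity.
Qed.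

Lemma a0_bounded b M : 0 <= b <= 1 -> 0 < M -> coef_bounded (a0 b M) (2 + M).
Proof.
  intros Hb HM. apply (classF_bounded b M); [auto|auto|reflexivity|reflexivity| |].
  simpl. rewrite Cmod_R, Rabs_Ropp, Rabs_pos_eq; lra.
  intros n Hn. destruct n as [|[|[|n]]]; try lia. simpl. rewrite Cmod_R, Rabs_Ropp, Rabs_pos_eq; lra.
Qed.

Lemma f0_D1 b M x : 0 <= b <= 1 -> 0 < M -> 0 <= x < 1 ->
  PS (dcoef (a0 b M)) (RtoC x) = RtoC (1 - N1 b M x).
Proof.
  intros Hb HM Hx.
  set (t := fun n => match n with O => 1 | 1%nat => - (4 * b * x)
            | _ => - M * ((INR n + 1) * x ^ n) end).
  assert (Ht : is_series t (1 - N1 b M x)).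
  { apply is_series_decr_n with 2%nat. lia.
    pose proof (is_series_scal (K:=R_AbsRing) (V:=R_NormedModule) (- M) _ _ (tail2R _ _ (series_G x Hx))) as H.
    match goal with |- is_series _ ?L => replace L with (scal (- M) (/ (1 - x) ^ 2 - ((INR 0 + 1) * x ^ 0 + (INR 1 + 1) * x ^ 1))) end.
    - eapply is_series_ext. 2: apply H. intros n. cbv beta. rewrite Rscal_eq'. reflexivity.
    - rewrite Rscal_eq'. simpl pred. rewrite sum_n_1R. change (@eq R (- M * (/ (1 - x) ^ 2 - ((INR 0 + 1) * x ^ 0 + (INR 1 + 1) * x ^ 1))) ((1 - N1 b M x) + - (t 0%nat + t 1%nat))). unfold t, N1. simpl. ring. }
  apply RtoC_series in Ht.
  eapply Cseries_uniq.
  - apply (PS_spec _ ((2 + M) * 2 ^ 0) 1).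
    apply dcoef_bound. apply a0_bounded; auto.
    rewrite Cmod_R, Rabs_pos_eq; lra.
  - eapply is_series_ext. 2: apply Ht. intros n. cbv beta. rewrite pow_n_RtoC. unfold dcoef, t.
    destruct n as [|[|n]].
    + change (@eq C (RtoC 1) (1 * 1 * 1)%C). ring.
    + simpl a0. rewrite <- !RtoC_mult. f_equal. simpl. ring.
    + change (a0 b M (S (S (S n)))) with (RtoC (- M)).
      rewrite <- !RtoC_mult. f_equal. rewrite !S_INR. ring.
Qed.

Lemma f0_D2 b M x : 0 <= b <= 1 -> 0 < M -> 0 <= x < 1 ->
  (RtoC x * PS (dcoef (dcoef (a0 b M))) (RtoC x))%C = RtoC (- N2 b M x).
Proof.
  intros Hb HM Hx.
  set (t := fun n => match n with O => - (4 * b)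
            | _ => - M * ((INR n + 1) * (INR n + 2) * x ^ n) end).
  assert (Ht : is_series t (- 4 * b - M * (2 / (1 - x) ^ 3 - 2))).
  { apply is_series_decr_n with 1%nat. lia.
    pose proof (is_series_scal (K:=R_AbsRing) (V:=R_NormedModule) (- M) _ _ (tail1R _ _ (series_H x Hx))) as H.
    match goal with |- is_series _ ?L => replace L with (scal (- M) (2 / (1 - x) ^ 3 - (INR 0 + 1) * (INR 0 + 2) * x ^ 0)) end.
    - eapply is_series_ext. 2: apply H. intros n. cbv beta. rewrite Rscal_eq'. reflexivity.
    - rewrite Rscal_eq'. simpl pred. rewrite sum_O.
      change (@eq R (- M * (2 / (1 - x) ^ 3 - (INR 0 + 1) * (INR 0 + 2) * x ^ 0)) ((- 4 * b - M * (2 / (1 - x) ^ 3 - 2)) + - t 0%nat)).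
      unfold t. simpl. ring. }
  apply RtoC_series in Ht.
  assert (E : PS (dcoef (dcoef (a0 b M))) (RtoC x) = RtoC (- 4 * b - M * (2 / (1 - x) ^ 3 - 2))).
  { eapply Cseries_uniq.
    - apply (PS_spec _ ((2 + M) * 2 ^ 0 * 2 ^ 1) 2).
      apply dcoef_bound, dcoef_bound, a0_bounded; auto.
      rewrite Cmod_R, Rabs_pos_eq; lra.
    - eapply is_series_ext. 2: apply Ht. intros n. cbv beta. rewrite pow_n_RtoC. unfold dcoef, t.
      destruct n as [|n].
      + simpl a0. rewrite <- !RtoC_mult. f_equal. simpl. ring.
      + change (a0 b M (S (S (S n)))) with (RtoC (- M)).
        rewrite <- !RtoC_mult. f_equal. rewrite !S_INR. ring. }
  rewrite E, <- RtoC_mult. f_equal. unfold N2. ring.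
Qed.

Lemma f0_derivs b M : 0 <= b <= 1 -> 0 < M ->
  derivs_on_disk (f0 b M) (PS (dcoef (a0 b M))) (PS (dcoef (dcoef (a0 b M)))).
Proof.
  intros Hb HM z Hz. pose proof (a0_bounded b M Hb HM) as HK.
  split.
  - eapply is_derive_ext_loc. 2: apply (PS_deriv _ _ 0 HK z Hz).
    apply locally_disk; auto. intros w Hw.
    eapply Cseries_uniq. apply (PS_spec _ _ 0 w HK Hw). apply f0_taylor; auto.
  - apply (PS_deriv _ ((2 + M) * 2 ^ 0) 1). apply dcoef_bound; auto. auto.
Qed.

Lemma core b M alpha f f1 f2 z : 0 <= b <= 1 -> 0 < M -> 0 <= alpha < 1 ->
  class_F b M f -> derivs_on_disk f f1 f2 -> Cmod z < 1 -> 0 <= Pp b M alpha (Cmod z) ->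
  f1 z <> RtoC 0 /\ Cmod (z * f2 z / f1 z)%C <= 1 - alpha /\
  (0 < Pp b M alpha (Cmod z) -> Cmod (z * f2 z / f1 z)%C < 1 - alpha).
Proof.
  intros Hb HM Ha [a [Ht [H0 [H1 [H2 H3]]]]] Hd Hz HP.
  assert (HK : coef_bounded a (2 + M)) by (apply (classF_bounded b M); auto).
  destruct (derivs_PS a _ f f1 f2 HK Ht Hd z Hz) as [E1 E2].
  pose proof (bound1 a _ b M z HK H1 H2 H3 Hz) as B1.
  pose proof (bound2 a _ b M z HK H2 H3 Hz) as B2.
  rewrite <- E1 in B1. rewrite <- E2 in B2.
  fold (N1 b M (Cmod z)) in B1. fold (N2 b M (Cmod z)) in B2.
  destruct (key_ineq b M alpha (Cmod z) ltac:(lra) HM Ha ltac:(split; [apply Cmod_ge_0|auto]) HP)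
    as [HD [HN [HN0 HS]]].
  assert (HA : 1 - N1 b M (Cmod z) <= Cmod (f1 z)).
  { assert (Cmod (RtoC 1) <= Cmod (f1 z) + Cmod (RtoC 1 - f1 z)).
    { replace (RtoC 1) with (f1 z + (RtoC 1 - f1 z))%C at 1 by ring. apply Cmod_triangle. }
    rewrite Cmod_1 in H. replace (RtoC 1 - f1 z)%C with (- (f1 z - 1))%C in H by ring.
    rewrite Cmod_opp in H. lra. }
  assert (Hnz : f1 z <> RtoC 0).
  { intros H. rewrite H, Cmod_0 in HA. lra. }
  assert (Hpos : 0 < Cmod (f1 z)) by lra.
  rewrite Cmod_div by auto.
  split; auto. split.
  - apply Rmult_le_reg_r with (Cmod (f1 z)); auto. unfold Rdiv. rewrite Rmult_assoc, Rinv_l by lra.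
    rewrite Rmult_1_r. nra.
  - intros HP'. specialize (HS HP').
    apply Rmult_lt_reg_r with (Cmod (f1 z)); auto. unfold Rdiv. rewrite Rmult_assoc, Rinv_l by lra.
    rewrite Rmult_1_r. nra.
Qed.

Lemma lub_eq (E : R -> Prop) (r0 : R) : E r0 -> (forall x, E x -> x <= r0) -> Lub_Rbar E = Finite r0.
Proof.
  intros H1 H2. apply is_lub_Rbar_unique. split.
  - intros x Ex. simpl. apply H2; auto.
  - intros l Hl. apply Hl; auto.
Qed.

Lemma Pp_nonneg b M alpha r0 r : 0 <= alpha < 1 -> is_r0 b M alpha r0 -> 0 <= r <= r0 ->
  0 <= Pp b M alpha r.
Proof.
  intros Ha H0 Hr. destruct (Req_dec r r0) as [->|Hne].
  - rewrite (Pp_r0 _ _ _ _ H0). lra.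
  - apply Rlt_le. apply (Pp_pos b M alpha r0); auto. lra.
Qed.

Lemma f0_vals b M alpha r0 : 0 <= b <= 1 -> 0 < M -> 0 <= alpha < 1 -> is_r0 b M alpha r0 ->
  forall f1 f2, derivs_on_disk (f0 b M) f1 f2 ->
  f1 (RtoC r0) = RtoC (1 - N1 b M r0) /\ (RtoC r0 * f2 (RtoC r0))%C = RtoC (- N2 b M r0) /\
  0 < 1 - N1 b M r0 /\ N2 b M r0 = (1 - alpha) * (1 - N1 b M r0).
Proof.
  intros Hb HM Ha H0 f1 f2 Hd.
  pose proof H0 as [Hr0 _].
  assert (Hz : Cmod (RtoC r0) < 1) by (rewrite Cmod_R, Rabs_pos_eq; lra).
  destruct (derivs_PS (a0 b M) _ (f0 b M) f1 f2 (a0_bounded b M Hb HM) (f0_taylor b M) Hd _ Hz) as [E1 E2].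
  rewrite E1, E2. rewrite f0_D1, f0_D2; auto; try lra.
  pose proof (Pp_r0 _ _ _ _ H0) as HP.
  destruct (key_ineq b M alpha r0 ltac:(lra) HM Ha ltac:(lra) ltac:(lra)) as [HD _].
  pose proof (Pp_ident b M alpha r0 ltac:(lra)) as Ei. rewrite HP in Ei.
  repeat split; auto. unfold Rdiv in Ei. rewrite Rmult_0_l in Ei. lra.
Qed.

Theorem theorem3p6 (b M alpha r0 r0half : R)
  (hb : 0 <= b <= 1) (hM : 0 < M) (ha : 0 <= alpha < 1)
  (hr0 : is_r0 b M alpha r0) (hr0half : is_r0 b M (1 / 2) r0half) :
  (* (i) *)
  (forall f f1 f2 : C -> C, class_F b M f -> derivs_on_disk f f1 f2 ->
     forall z : C, Cmod z <= r0 ->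
       f1 z <> 0%C /\ Cmod (z * f2 z / f1 z)%C <= 1 - alpha) /\
  (* (ii) *)
  radius_convexity (class_F b M) alpha = Finite r0 /\
  (* (iii) *)
  radius_unif_convexity (class_F b M) = Finite r0half /\
  (* sharpness: f_0 belongs to the class and attains equality in (i) at z = r0 *)
  (class_F b M (f0 b M) /\
   forall f1 f2 : C -> C, derivs_on_disk (f0 b M) f1 f2 ->
     f1 (RtoC r0) <> 0%C /\
     Cmod (RtoC r0 * f2 (RtoC r0) / f1 (RtoC r0))%C = 1 - alpha).
Proof.
  pose proof hr0 as [Hr0 _]. pose proof hr0half as [Hr1 _].
  assert (ha2 : 0 <= 1 / 2 < 1) by lra.
  split; [|split; [|split]].
  - intros f f1 f2 Hf Hd z Hz.
    destruct (core b M alpha f f1 f2 z hb hM ha Hf Hd ltac:(lra)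
               (Pp_nonneg b M alpha r0 (Cmod z) ha hr0 ltac:(split; [apply Cmod_ge_0|auto]))) as [A [B _]].
    auto.
  - unfold radius_convexity. apply lub_eq.
    + split. lra. intros f f1 f2 Hf Hd z Hz.
      assert (HP : 0 < Pp b M alpha (Cmod z)) by (apply (Pp_pos b M alpha r0); auto; split; [apply Cmod_ge_0|auto]).
      destruct (core b M alpha f f1 f2 z hb hM ha Hf Hd ltac:(lra) ltac:(lra)) as [A [_ C]].
      split; auto. specialize (C HP).
      set (w := (z * f2 z / f1 z)%C) in *.
      pose proof (re_le_Cmod w). apply Rabs_le_between in H.
      change (Re (1 + w)%C) with (1 + Re w). lra.
    + intros x [Hx Hc]. destruct (Rle_or_lt x r0) as [H|H]; auto. exfalso.
      pose proof (f0_derivs b M hb hM) as Hd.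
      destruct (f0_vals b M alpha r0 hb hM ha hr0 _ _ Hd) as [E1 [E2 [HD HN]]].
      destruct (Hc _ _ _ (f0_classF b M ltac:(lra) hM) Hd (RtoC r0)) as [_ Hre].
      rewrite Cmod_R, Rabs_pos_eq; lra.
      rewrite E1, E2, <- RtoC_div, <- RtoC_plus, re_RtoC in Hre by lra.
      rewrite HN in Hre.
      replace (- ((1 - alpha) * (1 - N1 b M r0)) / (1 - N1 b M r0)) with (- (1 - alpha)) in Hre by (field; lra).
      lra.
  - unfold radius_unif_convexity. apply lub_eq.
    + split. lra. intros f f1 f2 Hf Hd z Hz.
      assert (HP : 0 < Pp b M (1/2) (Cmod z)) by (apply (Pp_pos b M (1/2) r0half); auto; split; [apply Cmod_ge_0|auto]).
      destruct (core b M (1/2) f f1 f2 z hb hM ha2 Hf Hd ltac:(lra) ltac:(lra)) as [A [_ C]].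
      split; auto. specialize (C HP).
      set (w := (z * f2 z / f1 z)%C) in *.
      pose proof (re_le_Cmod w). apply Rabs_le_between in H.
      change (Re (1 + w)%C) with (1 + Re w). lra.
    + intros x [Hx Hc]. destruct (Rle_or_lt x r0half) as [H|H]; auto. exfalso.
      pose proof (f0_derivs b M hb hM) as Hd.
      destruct (f0_vals b M (1/2) r0half hb hM ha2 hr0half _ _ Hd) as [E1 [E2 [HD HN]]].
      destruct (Hc _ _ _ (f0_classF b M ltac:(lra) hM) Hd (RtoC r0half)) as [_ Hre].
      rewrite Cmod_R, Rabs_pos_eq; lra.
      rewrite E1, E2, <- RtoC_div, <- RtoC_plus, re_RtoC, Cmod_R in Hre by lra.
      rewrite HN in Hre.
      replace (- ((1 - 1/2) * (1 - N1 b M r0half)) / (1 - N1 b M r0half)) with (- (1 - 1/2)) in Hre by (field; lra).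
      rewrite Rabs_left1 in Hre; lra.
  - split. apply f0_classF; lra.
    intros f1 f2 Hd.
    destruct (f0_vals b M alpha r0 hb hM ha hr0 _ _ Hd) as [E1 [E2 [HD HN]]].
    rewrite E1, E2. split.
    + intros H. apply RtoC_inj in H. lra.
    + rewrite <- RtoC_div by lra. rewrite Cmod_R, HN.
      rewrite Rabs_left1. field. lra.
      apply Rmult_le_reg_r with (1 - N1 b M r0). auto.
      unfold Rdiv. rewrite Rmult_assoc, Rinv_l by lra. nra.
Qed.
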